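(* Let $c_0$ be a positive integer and let $\kappa_0\in\overline{\mathbb{Z}}_p$ satisfy condition $( * )$. Then there exists an increasing sequence of positive integers $(k_i)_{i\ge0}$ such that for each $i$: (a) $k_i-1>c_0(2+\log_p k_{i+1})$, and (b) no integer in $\{k_i,k_i+1,\dots,k_{i+1}-1\}$ is congruent to $\kappa_0$ modulo $p^{\lceil\log_p k_{i+1}\rceil}$ (i.e. for no such integer $k$ does $k-\kappa_0$ lie in $p^{\lceil\log_p k_{i+1}\rceil}\overline{\mathbb{Z}}_p$).
   Context: For $\lambda\in\mathbb{Z}_p$ and $m\ge1$, let $\lambda^{\{m\}}$ denote the unique integer in $\{0,1,\dots,p^m-1\}$ congruent to $\lambda$ modulo $p^m$. An element $\lambda\in\overline{\mathbb{Z}}_p$ satisfies condition $( * )$ if one of the following holds: (1) $\lambda\notin\mathbb{Z}_p$; (2) $\lambda\in\mathbb{Z}_p\setminus\mathbb{N}$ and $\lambda^{\{m\}}/m\to\infty$ as $m\to\infty$; (3) $\lambda\in\mathbb{N}$. *)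

(* Defs.v *)
From Stdlib Require Import Reals.
From mathcomp Require Import all_boot all_algebra.
Set Implicit Arguments. Unset Strict Implicit. Unset Printing Implicit Defensive.
Import GRing.Theory Num.Theory.
Local Open Scope ring_scope.

(* O plays the role of \overline{Z}_p.            *)
Definition congp (O : comNzRingType) (p m : nat) (x y : O) : Prop :=
  exists z : O, x - y = ((p ^ m)%N)%:R * z.

(* Z \cap p^m O = p^m Z  (true for O = \overline{Z}_p). *)
Definition int_div_reflect (O : comNzRingType) (p : nat) : Prop :=
  forall (a : int) (m : nat), congp p m (a%:~R : O) 0 -> (((p ^ m)%N)%:Z %| a)%Z.

(* lambda \in Z_p  <=>  lambda is in the p-adic closure of Z in O. *)
Definition inZp (O : comNzRingType) (p : nat) (l : O) : Prop :=
  forall m : nat, exists a : int, congp p m l (a%:~R).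

Definition isNat (O : comNzRingType) (l : O) : Prop := exists n : nat, l = n%:R.

(* lambda^{m} / m -> oo, where lambda^{m} is the (unique) integer r in
   {0,..,p^m-1} with r = lambda mod p^m. *)
Definition resid_over_m_to_infty (O : comNzRingType) (p : nat) (l : O) : Prop :=
  forall B : nat, exists M : nat, forall m : nat, (M <= m)%N ->
    forall r : nat, (r < p ^ m)%N -> congp p m l (r%:R) -> (B * m < r)%N.

Definition cond_star (O : comNzRingType) (p : nat) (l : O) : Prop :=
  ~ inZp p l
  \/ (inZp p l /\ ~ isNat l /\ resid_over_m_to_infty p l)
  \/ isNat l.

Definition logp (p x : nat) : R := Rdiv (ln (INR x)) (ln (INR p)).

Definition cond_a (p c0 ki kj : nat) : Prop :=
  Rgt (Rminus (INR ki) (INR 1)) (Rmult (INR c0) (Rplus (INR 2) (logp p kj))).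

(* ceil(log_p k) for k >= 1 is the least e with k <= p^e, i.e. [up_log p k]. *)
Definition ceil_logp (p k : nat) : nat := up_log p k.

(* Main.v *)
Require Import Defs.
From Stdlib Require Import Reals Lra Lia Classical ClassicalEpsilon.
From mathcomp Require Import all_boot all_algebra zify ring.
Import GRing.Theory.

Lemma INR_expn p e : INR (expn p e) = pow (INR p) e.
Proof.
elim: e => [|e IH] //=. rewrite expnS -IH.
change (muln p (expn p e)) with (Nat.mul p (expn p e)). by rewrite mult_INR.
Qed.

Section RealPart.
Local Open Scope R_scope.
Lemma cond_a_suff p c0 k k' e : (1 < p)%N -> (0 < k')%N -> (k' <= expn p e)%N ->
  (c0*(2+e)+1 < k)%N -> cond_a p c0 k k'.
Proof.
move=> hp hk' hle hlt. rewrite /cond_a /logp.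
have Hp : (INR 1 < INR p) by apply lt_INR; apply/ltP.
simpl in Hp.
have lnp : (0 < ln (INR p)) by rewrite -ln_1; apply ln_increasing; lra.
have Hk0 : (0 < INR k') by apply lt_0_INR; apply/ltP.
have Hk' : (INR k' <= INR p ^ e) by rewrite -INR_expn; apply le_INR; apply/leP.
have L : (ln (INR k') <= INR e * ln (INR p)).
  rewrite -ln_pow; last lra.
  case: (Rle_lt_or_eq_dec _ _ Hk') => h.
    by apply Rlt_le, ln_increasing.
  by rewrite h; apply Rle_refl.
have L2 : (ln (INR k') / ln (INR p) <= INR e).
  apply (Rmult_le_reg_r (ln (INR p))) => //.
  unfold Rdiv; rewrite Rmult_assoc Rinv_l; lra.
have Hk : (INR (Nat.add (Nat.mul c0 (Nat.add 2 e)) 1) < INR k).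
  apply lt_INR. apply/ltP. move: hlt. lia.
rewrite plus_INR mult_INR plus_INR in Hk.
have := Rmult_le_compat_l _ _ _ (pos_INR c0) L2.
lra.
Qed.
End RealPart.

Lemma grow c0 e : (4*c0+8 <= e)%N -> (c0*(e+4) < 2^e)%N.
Proof.
move=> /subnKC <-. set t := (e - _)%N. clearbody t. elim: t => [|t IH].
  rewrite addn0 (_ : (4*c0+8 = (2*c0+4)*2)%N); last lia.
  rewrite expnM. have := ltn_expl (2*c0+4) (isT : (1 < 2)%N).
  set A := (2 ^ _)%N. move=> hA. nia.
have -> : (4*c0+8+t.+1 = (4*c0+8+t).+1)%N by lia.
rewrite expnS.
have : (c0 < 2 ^ (4*c0+8+t))%N.
  apply: (leq_trans (ltn_expl c0 (isT : (1 < 2)%N))). rewrite leq_exp2l //. lia.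
move: IH. set A := (2 ^ _)%N. lia.
Qed.

Lemma efacts c0 k X : (0<c0)%N -> (c0*(4*c0+11+X)+1 <= k)%N ->
  let e := (k.-1 %/ c0 - 3)%N in
  [/\ (c0*(2+e)+1 < k)%N, (4*c0+8+X <= e)%N & (k <= c0*(e+4))%N].
Proof.
move=> hc hk e. have h1 := leq_trunc_div k.-1 c0. have h2 := ltn_ceil k.-1 hc.
have h3 : (4*c0+11+X <= k.-1 %/ c0)%N by rewrite leq_divRL //; lia.
rewrite /e. move: h1 h2 h3. set q := (k.-1 %/ c0)%N. move=> h1 h2 h3.
split; nia.
Qed.

Lemma build (K0 : nat) (Q : nat -> nat -> Prop) : (0<K0)%N ->
  (forall k, (K0<=k)%N -> exists k', (K0 <= k')%N /\ (k<k')%N /\ Q k k') ->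
  exists f : nat -> nat, (forall i, (0 < f i)%N) /\ (forall i, (f i < f i.+1)%N) /\ (forall i, Q (f i) (f i.+1)).
Proof.
move=> hK H.
have H' : forall k, exists k', (K0 <= k)%N -> (K0 <= k')%N /\ (k<k')%N /\ Q k k'.
  move=> k. case: (leqP K0 k) => hk.
    by have [k' hk'] := H k hk; exists k'.
  by exists 0%N => h; exfalso; lia.
pose g k := proj1_sig (constructive_indefinite_description _ (H' k)).
have gP k : (K0 <= k)%N -> (K0 <= g k)%N /\ (k < g k)%N /\ Q k (g k).
  exact: (proj2_sig (constructive_indefinite_description _ (H' k))).
pose f i := iter i g K0.
have fK i : (K0 <= f i)%N.
  elim: i => [|i IH] //=. exact: (gP _ IH).1.
exists f; split; [|split] => i.
- exact: leq_trans hK (fK i).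
- exact: (gP _ (fK i)).2.1.
- exact: (gP _ (fK i)).2.2.
Qed.

Section Cong.
Variables (O : comNzRingType) (p : nat).
Local Open Scope ring_scope.

Lemma congp_weak m u (x y : O) : (u <= m)%N -> congp p m x y -> congp p u x y.
Proof.
move=> /subnKC <- [z hz]. exists (((p ^ (m - u))%N)%:R * z).
by rewrite hz expnD natrM mulrA.
Qed.

Lemma congp_sym m (x y : O) : congp p m x y -> congp p m y x.
Proof. move=> [z hz]; exists (- z). by rewrite mulrN -hz opprB. Qed.

Lemma congp_trans m (x y w : O) : congp p m x y -> congp p m y w -> congp p m x w.
Proof.
move=> [z hz] [z' hz']; exists (z + z').
by rewrite mulrDr -hz -hz' addrA subrK.
Qed.

Lemma congp_dvd u (j n : nat) : int_div_reflect O p -> (n <= j)%N ->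
  congp p u (j%:R : O) (n%:R) -> (p ^ u %| j - n)%N.
Proof.
move=> hO hnj [z hz].
have := hO (Posz (j - n)%N) u. rewrite dvdzE /=. apply.
exists z. rewrite subr0. change ((Posz (j - n)%N)%:~R) with (((j - n)%N)%:R : O).
by rewrite natrB.
Qed.

Lemma residue (l : O) m : (0 < p)%N -> Defs.inZp p l ->
  exists r : nat, (r < p ^ m)%N /\ congp p m l (r%:R).
Proof.
move=> hp H. have [a [z hz]] := H m.
pose d := Posz (p ^ m)%N.
have dn0 : d != 0 by rewrite /d; apply/eqP => -[]; apply/eqP; rewrite -lt0n expn_gt0 hp.
have hge := modz_ge0 a dn0.
have hlt := ltz_pmod a (d:=d).
have ea := divz_eq a d.
move: hge hlt ea. case: (a %% d)%Z => [r|r] //= _ hlt ea.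
exists r; split.
  move: hlt; rewrite /d. move=> h. have : (Posz r < Posz (p^m)%N)%R.
    apply: h. rewrite ltz_nat expn_gt0 hp //.
  by rewrite ltz_nat.
exists (z + (a %/ d)%Z%:~R).
have -> : (r%:R : O) = a%:~R - ((a %/ d)%Z%:~R * (p ^ m)%N%:R).
  have ea' : (a%:~R : O) = ((a %/ d)%Z * d + Posz r)%:~R by rewrite -ea.
  rewrite ea' intrD intrM. change ((Posz r)%:~R : O) with (r%:R : O).
  change (d%:~R : O) with ((p^m)%N%:R : O). by rewrite addrAC subrr add0r.
rewrite mulrDr -hz. ring.
Qed.
End Cong.

Local Open Scope ring_scope.

Theorem lemma4p5 (p : nat) (O : comNzRingType) (hp : prime p)
  (hO : int_div_reflect O p) (c0 : nat) (hc0 : (0 < c0)%N)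
  (kappa0 : O) (hk : cond_star p kappa0) :
  exists k : nat -> nat,
    (forall i, (0 < k i)%N) /\
    (forall i, (k i < k i.+1)%N) /\
    (forall i, cond_a p c0 (k i) (k i.+1)) /\
    (forall i (j : nat), (k i <= j < k i.+1)%N ->
       ~ congp p (ceil_logp p (k i.+1)) (j%:R) kappa0).
Proof.
have hp1 : (1 < p)%N := prime_gt1 hp.
have hp0 : (0 < p)%N := prime_gt0 hp.
pose Q k k' := cond_a p c0 k k' /\ forall j : nat, (k <= j < k')%N -> ~ congp p (ceil_logp p k') (j%:R) kappa0.
suff [K0 [hK0 H]] : exists K0, (0 < K0)%N /\ forall k, (K0 <= k)%N -> exists k', (K0 <= k')%N /\ (k < k')%N /\ Q k k'.
  have [f [h1 [h2 h3]]] := @build K0 Q hK0 H.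
  exists f; do !split => //; [move=> i; exact: (h3 i).1 | move=> i; exact: (h3 i).2].
case: hk => [hnz | [[hz [_ hres]] | [n hn]]].
- have [m0 hm0] : exists m0, forall a : int, ~ congp p m0 kappa0 a%:~R.
    apply: NNPP => hne. apply: hnz => m. apply: NNPP => hm. apply: hne.
    exists m => a ha. apply: hm. by exists a.
  exists (c0*(4*c0+11+p^m0)+1)%N; split; first lia.
  move=> k hk. have [F1 F2 F3] := @efacts _ _ _ hc0 hk. move: F1 F2 F3. set e := (_ - 3)%N => F1 F2 F3.
  have hg : (c0*(e+4) < 2^e)%N by apply: grow; lia.
  have h2p : (2^e <= p^e)%N by rewrite leq_exp2r //; lia.
  have hm := ltn_expl m0 hp1.
  exists (p^e)%N. split; [lia|split;[lia|split]].
  + apply: (@cond_a_suff p c0 k (p^e)%N e) => //; by rewrite expn_gt0 hp0.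
  + move=> j hj hc. rewrite /ceil_logp up_expnK // in hc.
    apply: (hm0 (Posz j)). apply: (@congp_sym O p). apply: (@congp_weak O p e); first lia. exact hc.
- have [M hM] := hres (2*c0)%N.
  exists (c0*(4*c0+11+M)+1)%N; split; first lia.
  move=> k hk. have [F1 F2 F3] := @efacts _ _ _ hc0 hk. move: F1 F2 F3. set e := (_ - 3)%N => F1 F2 F3.
  have [r [hr hcr]] := @residue O p kappa0 e hp0 hz.
  have hMe : (M <= e)%N by lia.
  have hMr := hM e hMe r hr hcr.
  have hkr : (k < r)%N by clear -F2 F3 hMr; nia.
  exists r. split; [lia|split;[lia|split]].
  + apply: (@cond_a_suff p c0 k r e) => //; [lia | exact: ltnW].
  + move=> j hj hc. rewrite /ceil_logp in hc.
    have hu := up_log_min hp1 (ltnW hr).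
    have hpu := up_logP r hp1.
    have hc2 := @congp_sym O p _ _ _ (@congp_trans O p _ _ _ _ hc (@congp_weak O p _ _ _ _ hu hcr)).
    have hjr : (j <= r)%N by lia.
    have hd := @congp_dvd O p _ _ _ hO hjr hc2.
    have hrj : (0 < r - j)%N by lia.
    have := dvdn_leq hrj hd. lia.
- exists (c0*(4*c0+11+n)+1)%N; split; first lia.
  move=> k hk. have [F1 F2 F3] := @efacts _ _ _ hc0 hk. move: F1 F2 F3. set e := (_ - 3)%N => F1 F2 F3.
  have hg : (c0*(e+4) < 2^e)%N by apply: grow; lia.
  have h2p : (2^e <= p^e)%N by rewrite leq_exp2r //; lia.
  exists (p^e)%N. split; [lia|split;[lia|split]].
  + apply: (@cond_a_suff p c0 k (p^e)%N e) => //; by rewrite expn_gt0 hp0.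
  + move=> j hj hc. rewrite /ceil_logp up_expnK // hn in hc.
    have hn1 : (n <= c0*(4*c0+11+n))%N.
      by rewrite (leq_trans (leq_addl (4*c0+11) n)) // leq_pmull.
    have hnj : (n <= j)%N by lia.
    have hd := @congp_dvd O p _ _ _ hO hnj hc.
    have hjn : (0 < j - n)%N by lia.
    have := dvdn_leq hjn hd. lia.
Qed.
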